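(* Let $A$ be a set and let $\mathcal{E}$ be a set of subsets of $A$ such that (C1) for every $K\subseteq A$, $K\in\mathcal{E}$ if and only if $A\setminus K\notin\mathcal{E}$; and (C2) if $K\in\mathcal{E}$ and $K\subseteq L\subseteq A$, then $L\in\mathcal{E}$. Suppose each member of $A$ chooses one of the six strict total orders on three candidates $a,b,c$, labelled by $\mathbb{Z}/6\mathbb{Z}$ as: $1: a>b>c$, $2: a>c>b$, $3: c>a>b$, $4: c>b>a$, $5: b>c>a$, $6: b>a>c$. For $p\in\mathbb{Z}/6\mathbb{Z}$ let $K(p)$ be the set of members who chose ranking $p$, $K(p,q)=K(p)\cup K(q)$ and $K(p,q,r)=K(p)\cup K(q)\cup K(r)$. If (T) there exists $p$ with $K(p,p+1)\in\mathcal{E}$, then (V) there exists $p$ such that both $K(p,p+1,p+2)\in\mathcal{E}$ and $K(p+1,p+2,p+3)\in\mathcal{E}$.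
   Context: Indices are taken modulo $6$. *)

(* Defs.v *)
From mathcomp Require Import all_boot all_algebra.
Set Implicit Arguments. Unset Strict Implicit. Unset Printing Implicit Defensive.
Import GRing.Theory.
Local Open Scope ring_scope.

Definition subsetProp {A : Type} (K L : A -> Prop) : Prop := forall x, K x -> L x.
Definition complP {A : Type} (K : A -> Prop) : A -> Prop := fun x => ~ K x.

(* Rankings of three candidates a, b, c are labelled by 'Z_6, indices mod 6:
   1: a>b>c, 2: a>c>b, 3: c>a>b, 4: c>b>a, 5: b>c>a, 6 (= 0 mod 6): b>a>c.
   [choice x] is the label of the ranking chosen by member x. *)
Definition Kp {A : Type} (choice : A -> 'Z_6) (p : 'Z_6) : A -> Prop :=
  fun x => choice x = p.
Definition K2 {A : Type} (choice : A -> 'Z_6) (p q : 'Z_6) : A -> Prop :=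
  fun x => Kp choice p x \/ Kp choice q x.
Definition K3 {A : Type} (choice : A -> 'Z_6) (p q r : 'Z_6) : A -> Prop :=
  fun x => Kp choice p x \/ Kp choice q x \/ Kp choice r x.

(* Main.v *)
Require Import Defs.
From mathcomp Require Import all_boot all_algebra.
From Stdlib Require Import Classical.
Local Open Scope ring_scope.

Lemma z1 (p y : 'Z_6) : [&& p+4+1 == p+5, p+5+1 == p+4+2, p+5+2 == p+4+3, p+5+1 == p, p+5+2 == p+1 & (((y != p+1) && (y != p+2) && (y != p+3)) ==> [|| y == p+4, y == p+4+1 | y == p+4+2])].
Proof. by case: p => -[|[|[|[|[|[|//]]]]]] ? ; case: y => -[|[|[|[|[|[|//]]]]]] ?. Qed.

Theorem mainTheorem2 (A : Type) (E : (A -> Prop) -> Prop)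
  (C1 : forall K : A -> Prop, E K <-> ~ E (complP K))
  (C2 : forall K L : A -> Prop, E K -> subsetProp K L -> E L)
  (choice : A -> 'Z_6)
  (T : exists p : 'Z_6, E (K2 choice p (p + 1))) :
  exists p : 'Z_6,
    E (K3 choice p (p + 1) (p + 2)) /\ E (K3 choice (p + 1) (p + 2) (p + 3)).
Proof.
case: T => p Hp.
move: (z1 p 0) => /and5P [/eqP e1 /eqP e2 /eqP e3 /eqP e4 /andP [/eqP e5 _]].
have Hl : E (K3 choice (p+5) (p+5+1) (p+5+2)).
  apply: (C2 _ _ Hp) => x; rewrite /K2 /K3 /Kp e4 e5; tauto.
have [H|H] := classic (E (K3 choice (p + 1) (p + 2) (p + 3))).
  exists p; split => //.
  apply: (C2 _ _ Hp) => x; rewrite /K2 /K3 /Kp; tauto.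
have Hc : E (complP (K3 choice (p + 1) (p + 2) (p + 3))).
  apply/C1 => Hcc; apply: H; apply: (C2 _ _ Hcc) => x; rewrite /complP.
  by move/NNPP.
exists (p+4); split.
  apply: (C2 _ _ Hc) => x; rewrite /complP /K3 /Kp => Hx.
  move: (z1 p (choice x)) => /and5P [_ _ _ _ /andP [_ /implyP Hi]].
  have Hy : (choice x != p + 1) && (choice x != p + 2) && (choice x != p + 3).
    apply/andP; split; [apply/andP; split|]; apply/negP => /eqP Hy; apply: Hx; tauto.
  by case/or3P: (Hi Hy) => /eqP; tauto.
apply: (C2 _ _ Hl) => x; rewrite /K3 /Kp e1 -e2 -e3; tauto.
Qed.
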